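(* Let $A=H+S\in\mathbb{C}^{n,n}$ with $H=H^*\neq 0$ positive semidefinite and $S=-S^*\neq 0$. Let $U\in\mathbb{C}^{n,n}$ be unitary, $r\geq 2$, and $n_1\geq\cdots\geq n_{r-1}>0$, $n_r\geq 0$ with $\sum n_i=n$, such that $U^*HU=\mathrm{diag}(H_{11},0)$ with $H_{11}=H_{11}^*\in\mathbb{C}^{n_1,n_1}$ positive definite, and $U^*SU=[S_{ij}]_{i,j=1}^r$ (blocks $S_{ij}\in\mathbb{C}^{n_i,n_j}$) with $S_{ij}=0$ for $|i-j|>1$, $S_{i,r}=S_{r,i}=0$ for $i<r$, $S_{ii}=-S_{ii}^*$, and $S_{i,i-1}=-S_{i-1,i}^*=[\Sigma_{i,i-1}\;\,0]$ with $\Sigma_{i,i-1}\in\mathbb{C}^{n_i,n_i}$ nonsingular for $i=2,\dots,r-1$. Set $\widehat{A}_{11}=H_{11}+S_{11}$ and $\mathcal{S}_0:=\widehat{A}_{11}$, and define recursively $\mathcal{S}_k=S_{k+1,k+1}-S_{k+1,k}\,\mathcal{S}_{k-1}^{-1}\,S_{k,k+1}$ for $k=1,\dots,r-2$. Then all these inverses exist, $\widehat{A}_{11}$ and the Schur complements $\mathcal{S}_1,\dots,\mathcal{S}_{r-2}$ are positive definite, and $U^*AU$ is transformed via this block Gaussian elimination (Schur complement reduction), i.e. $U^*AU=L\,D\,W$ with $L$ block unit lower triangular and $W$ block unit upper triangular, into the block diagonal form $$D=\mathrm{diag}\big(\widehat{A}_{11},\mathcal{S}_1,\dots,\mathcal{S}_{r-2},S_{r,r}\big),$$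 where the skew-Hermitian block $S_{r,r}$ is absent if $n_r=0$.
   Context: A (not necessarily Hermitian) matrix $M\in\mathbb{C}^{m,m}$ is called positive definite (resp. positive semidefinite) if its Hermitian part $\frac12(M+M^* )$ is positive definite (resp. positive semidefinite). $M^*$ denotes the conjugate transpose. *)

(* Defs.v *)
(* Complex numbers are modelled by an arbitrary
   numClosedFieldType C (e.g. C := R[i] or algC); conjugation is Num.conj. *)
From HB Require Import structures.
From mathcomp Require Import all_boot all_order all_algebra.
Set Implicit Arguments.
Unset Strict Implicit.
Unset Printing Implicit Defensive.
Import Order.TTheory GRing.Theory Num.Theory.
Local Open Scope ring_scope.

Section Defs.
Variable C : numClosedFieldType.

Definition adjmx m n (M : 'M[C]_(m, n)) : 'M[C]_(n, m) := (map_mx Num.conj M)^T.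

Definition is_herm n (M : 'M[C]_n) : Prop := adjmx M = M.
Definition is_skewherm n (M : 'M[C]_n) : Prop := adjmx M = - M.

Definition herm_part n (M : 'M[C]_n) : 'M[C]_n := 2^-1 *: (M + adjmx M).

(* Hermitian positive (semi)definiteness of a Hermitian matrix K:
   v^* K v > 0 (resp. >= 0) for all v <> 0; in a numClosedFieldType,
   0 < z means z is real and positive. *)
Definition herm_posdef n (K : 'M[C]_n) : Prop :=
  is_herm K /\ forall v : 'cV[C]_n, v != 0 -> 0 < (adjmx v *m K *m v) 0 0.
Definition herm_possemidef n (K : 'M[C]_n) : Prop :=
  is_herm K /\ forall v : 'cV[C]_n, 0 <= (adjmx v *m K *m v) 0 0.

(* positive (semi)definite in the paper's sense (possibly non-Hermitian M):
   its Hermitian part is positive (semi)definite *)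
Definition posdef n (M : 'M[C]_n) : Prop := herm_posdef (herm_part M).
Definition possemidef n (M : 'M[C]_n) : Prop := herm_possemidef (herm_part M).

Definition cunitary n (U : 'M[C]_n) : Prop := adjmx U *m U = 1%:M.
End Defs.

(* Main.v *)
Require Import Defs.
From HB Require Import structures.
From mathcomp Require Import all_boot all_order all_algebra zify.
Import Order.TTheory GRing.Theory Num.Theory.
Local Open Scope ring_scope.
Set Implicit Arguments.
Unset Strict Implicit.

Section Helpers.
Variable C : numClosedFieldType.

Lemma adjmxK m n (M : 'M[C]_(m,n)) : adjmx (adjmx M) = M.
Proof. by apply/matrixP=> i j; rewrite !mxE conjCK. Qed.
Lemma adjmxM m n k (A : 'M[C]_(m,n)) (B : 'M_(n,k)) :
  adjmx (A *m B) = adjmx B *m adjmx A.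
Proof.
apply/matrixP=> i j; rewrite !mxE rmorph_sum; apply: eq_bigr => l _.
by rewrite !mxE rmorphM mulrC.
Qed.
Lemma adjmxD m n (A B : 'M[C]_(m,n)) : adjmx (A + B) = adjmx A + adjmx B.
Proof. by apply/matrixP=> i j; rewrite !mxE rmorphD. Qed.
Lemma adjmxN m n (A : 'M[C]_(m,n)) : adjmx (- A) = - adjmx A.
Proof. by apply/matrixP=> i j; rewrite !mxE rmorphN. Qed.
Lemma adjmxZ m n a (A : 'M[C]_(m,n)) : adjmx (a *: A) = a^* *: adjmx A.
Proof. by apply/matrixP=> i j; rewrite !mxE rmorphM. Qed.
Lemma adjmx1 n : adjmx (1%:M : 'M[C]_n) = 1%:M.
Proof. by apply/matrixP=> i j; rewrite !mxE rmorphMn rmorph1 eq_sym. Qed.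
Lemma adjmx0 m n : adjmx (0 : 'M[C]_(m,n)) = 0.
Proof. by apply/matrixP=> i j; rewrite !mxE rmorph0. Qed.

Lemma posdefE n (M : 'M[C]_n) : posdef M <->
  forall v : 'cV[C]_n, v != 0 -> 0 < (adjmx v *m (M + adjmx M) *m v) 0 0.
Proof.
have h2 : (0 : C) < 2^-1 by rewrite invr_gt0 ltr0n.
rewrite /posdef /herm_posdef /herm_part; split.
  case=> _ P v nv; have := P v nv.
  by rewrite -scalemxAr -scalemxAl mxE pmulr_rgt0.
move=> P; split.
  rewrite /is_herm adjmxZ adjmxD adjmxK fmorphV rmorphMn rmorph1 addrC //.
by move=> v nv; rewrite -scalemxAr -scalemxAl mxE pmulr_rgt0 // P.
Qed.

Lemma posdef_unit n (M : 'M[C]_n) : posdef M -> M \in unitmx.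
Proof.
move/posdefE => P; rewrite unitmxE unitfE -det_tr.
apply/negP => /det0P [w nw wM].
have Mv : M *m w^T = 0 by rewrite -[M]trmxK -trmx_mul wM trmx0.
have nv : w^T != 0.
  by apply: contra nw => /eqP e; rewrite -[w]trmxK e trmx0.
have := P _ nv.
rewrite mulmxDr mulmxDl -!mulmxA Mv mulmx0 add0r mulmxA -adjmxM Mv adjmx0 mul0mx.
by rewrite mxE ltxx.
Qed.

Lemma posdef_inv_quad n (M : 'M[C]_n) : posdef M ->
  forall u : 'cV[C]_n, u != 0 -> 0 < (adjmx u *m (invmx M + adjmx (invmx M)) *m u) 0 0.
Proof.
move=> PM u nu; have UM := posdef_unit PM.
have eu : u = M *m (invmx M *m u) by rewrite mulmxA mulmxV // mul1mx.
have nw : invmx M *m u != 0.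
  by apply: contra nu => /eqP e; rewrite eu e mulmx0.
move: (invmx M *m u) eu nw => w -> nw.
have -> : adjmx (M *m w) *m (invmx M + adjmx (invmx M)) *m (M *m w)
   = adjmx w *m (M + adjmx M) *m w.
  rewrite adjmxM -!mulmxA; congr (_ *m _); rewrite !mulmxA; congr (_ *m _).
  rewrite mulmxDr mulmxDl -mulmxA mulVmx // mulmx1 -adjmxM mulVmx // adjmx1.
  by rewrite mul1mx addrC.
by move/posdefE: PM; apply.
Qed.

Lemma schur_posdef a b (Sk : 'M[C]_a) (X : 'M_(a,b)) (M : 'M_b) :
  is_skewherm Sk -> posdef M -> (forall v : 'cV[C]_a, v != 0 -> adjmx X *m v != 0) ->
  posdef (Sk - X *m invmx M *m (- adjmx X)).
Proof.
move=> sk PM HX; apply/posdefE => v nv.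
have -> : Sk - X *m invmx M *m (- adjmx X) + adjmx (Sk - X *m invmx M *m (- adjmx X))
   = X *m (invmx M + adjmx (invmx M)) *m adjmx X.
  rewrite mulmxN opprK adjmxD sk !adjmxM adjmxK.
  rewrite addrACA subrr add0r mulmxDr mulmxDl !mulmxA.
  by [].
rewrite -(adjmxK X) -!mulmxA mulmxA -adjmxM adjmxK.
rewrite mulmxA; apply: posdef_inv_quad => //; exact: HX.
Qed.
End Helpers.
Theorem lemma4p2 (C : numClosedFieldType) (r : nat) (p : 'I_r -> nat)
  (A H S U : 'M[C]_(\sum_(i < r) p i))
  (Hb Sb : forall i j : 'I_r, 'M[C]_(p i, p j))
  (Sc : forall k : 'I_r, 'M[C]_(p k)) :
  (* r >= 2, n_1 >= ... >= n_{r-1} > 0, n_r >= 0, n = sum n_i *)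
  (2 <= r)%N ->
  (forall i j : 'I_r, (i <= j)%N -> (j.+1 < r)%N -> (p j <= p i)%N) ->
  (forall i : 'I_r, (i.+1 < r)%N -> (0 < p i)%N) ->
  (* A = H + S, H = H^* <> 0 psd, S = -S^* <> 0 *)
  A = H + S ->
  is_herm H -> H != 0 -> possemidef H ->
  is_skewherm S -> S != 0 ->
  cunitary U ->
  (* U^* H U = diag(H11, 0), H11 Hermitian positive definite *)
  adjmx U *m H *m U = \mxblock_(i, j) Hb i j ->
  (forall i j : 'I_r, ~ (i = 0%N :> nat /\ j = 0%N :> nat) -> Hb i j = 0) ->
  (forall i : 'I_r, i = 0%N :> nat -> is_herm (Hb i i) /\ posdef (Hb i i)) ->
  (* block structure of U^* S U *)
  adjmx U *m S *m U = \mxblock_(i, j) Sb i j ->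
  (forall i j : 'I_r, (i.+1 < j)%N \/ (j.+1 < i)%N -> Sb i j = 0) ->
  (forall i j : 'I_r, j = r.-1 :> nat -> (i < j)%N -> Sb i j = 0 /\ Sb j i = 0) ->
  (forall i : 'I_r, is_skewherm (Sb i i)) ->
  (forall i j : 'I_r, i = j.+1 :> nat -> (i.+1 < r)%N ->
     Sb i j = - adjmx (Sb j i) /\
     exists Sig : 'M[C]_(p i),
       Sig \in unitmx /\
       (forall (a : 'I_(p i)) (b : 'I_(p j)) (hb : (b < p i)%N),
          Sb i j a b = Sig a (Ordinal hb)) /\
       (forall (a : 'I_(p i)) (b : 'I_(p j)), (p i <= b)%N -> Sb i j a b = 0)) ->
  (* recursive definition of the Schur complements S_0 = A11hat, S_1, ... *)
  (forall k : 'I_r, k = 0%N :> nat -> Sc k = Hb k k + Sb k k) ->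
  (forall k j : 'I_r, k = j.+1 :> nat -> (k.+1 < r)%N ->
     Sc k = Sb k k - Sb k j *m invmx (Sc j) *m Sb j k) ->
  (* conclusions *)
  (forall k : 'I_r, (k.+1 < r)%N -> Sc k \in unitmx /\ posdef (Sc k)) /\
  exists Lb Wb : forall i j : 'I_r, 'M[C]_(p i, p j),
    (forall i : 'I_r, Lb i i = 1%:M) /\
    (forall i j : 'I_r, (i < j)%N -> Lb i j = 0) /\
    (forall i : 'I_r, Wb i i = 1%:M) /\
    (forall i j : 'I_r, (j < i)%N -> Wb i j = 0) /\
    adjmx U *m A *m U =
      \mxblock_(i, j) Lb i j
      *m \mxdiag_(i < r) (if (i.+1 < r)%N then Sc i else Sb i i)
      *m \mxblock_(i, j) Wb i j.
Proof.
move=> r2 pdec ppos eA hH nH psdH skS nS uU eH Hz Hpd eS Sz Slast Sskew Ssub Sc0 ScS.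
have P1 : forall k : 'I_r, (k.+1 < r)%N -> Sc k \in unitmx /\ posdef (Sc k).
  suff K : forall m (k : 'I_r), k = m :> nat -> (k.+1 < r)%N ->
      Sc k \in unitmx /\ posdef (Sc k) by move=> k; exact: K.
  elim=> [|m IH] k km kr.
    have pd : posdef (Sc k).
      rewrite Sc0 //; apply/posdefE => v nv.
      have [_ /posdefE Hp] := Hpd k km.
      rewrite adjmxD (Sskew k) addrACA subrr addr0; exact: Hp.
    by split=> //; exact: posdef_unit.
  have mr : (m < r)%N by lia.
  pose j := Ordinal mr.
  have [e [Sig [uS [eS' _]]]] := Ssub k j km kr.
  have [uj pj] := IH j erefl (ltac:(rewrite /=; lia)).
  have pd : posdef (Sc k).
    rewrite (ScS k j km kr).
    have -> : Sb j k = - adjmx (Sb k j) by rewrite e adjmxN adjmxK opprK.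
    apply: schur_posdef => // v nv; apply: contra nv => /eqP E.
    have pkj : (p k <= p j)%N by apply: pdec => //=; lia.
    have E2 : adjmx Sig *m v = 0.
      apply/matrixP => b c.
      have := congr1 (fun M : 'M_(p j, 1) => M (widen_ord pkj b) c) E.
      rewrite !mxE => H0; apply: etrans H0; apply: eq_bigr => a _; rewrite !mxE.
      rewrite (eS' a (widen_ord pkj b) (ltn_ord b)).
      by congr (_ ^* * _); congr (Sig a _); apply: val_inj.
    have -> : v = adjmx (invmx Sig) *m (adjmx Sig *m v).
      by rewrite mulmxA -adjmxM mulmxV // adjmx1 mul1mx.
    by rewrite E2 mulmx0.
  by split=> //; exact: posdef_unit.
split; first exact: P1.

pose Id' m n := (\matrix_(a < m, b < n) ((a:nat) == b)%:R : 'M[C]_(m, n)).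
have Id'E : forall n, Id' n n = 1%:M.
  by move=> n; apply/matrixP => a b; rewrite !mxE.
pose Lb := fun i j : 'I_r => if (i:nat) == j then Id' (p i) (p j)
  else if ((i:nat) == j.+1) && (i.+1 < r)%N then Sb i j *m invmx (Sc j) else 0.
pose Wb := fun i j : 'I_r => if (i:nat) == j then Id' (p i) (p j)
  else if ((j:nat) == i.+1) && (j.+1 < r)%N then invmx (Sc i) *m Sb i j else 0.
exists Lb, Wb.
split; first by move=> i; rewrite /Lb eqxx Id'E.
split.
  move=> i j ij; rewrite /Lb.
  have -> : ((i:nat) == j) = false by lia.
  by have -> : ((i:nat) == j.+1) = false by lia.
split; first by move=> i; rewrite /Wb eqxx Id'E.
split.
  move=> i j ij; rewrite /Wb.
  have -> : ((i:nat) == j) = false by lia.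
  by have -> : ((j:nat) == i.+1) = false by lia.
rewrite eA mulmxDr mulmxDl eH eS -mxblockD mul_mxblock_mxdiag mul_mxblock.
apply/eq_mxblock => i k.
have ir := ltn_ord i; have kr := ltn_ord k.
rewrite (bigD1 i) //= /Lb eqxx Id'E mul1mx -/Lb.
have [j1 ej1] : exists j1 : 'I_r, (j1 : nat) = i.-1.
  have h : (i.-1 < r)%N by lia.
  by exists (Ordinal h).
have Rem : \sum_(j | j != i) Lb i j *m (if (j.+1 < r)%N then Sc j else Sb j j) *m Wb j k
   = if (0 < i)%N && (i.+1 < r)%N then Sb i j1 *m invmx (Sc j1) *m Sc j1 *m Wb j1 k else 0.
  case: ifP => c.
    rewrite (bigD1 j1) /=; last by apply/eqP => /(congr1 val) /=; lia.
    rewrite big1 ?addr0.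
      rewrite /Lb.
      have -> : ((i:nat) == j1) = false by lia.
      have -> : ((i:nat) == j1.+1) = true by lia.
      have -> : (i.+1 < r)%N = true by lia.
      by have -> : (j1.+1 < r)%N = true by lia.
    move=> j /andP [ji jj1]; rewrite /Lb.
    have -> : ((i:nat) == j) = false by move: ji; rewrite -val_eqE /=; lia.
    have -> : ((i:nat) == j.+1) = false by move: jj1; rewrite -val_eqE /=; lia.
    by rewrite !mul0mx.
  apply: big1 => j ji; rewrite /Lb.
  have -> : ((i:nat) == j) = false by move: ji; rewrite -val_eqE /=; lia.
  have -> : (((i:nat) == j.+1) && (i.+1 < r)%N) = false by move: c; lia.
  by rewrite !mul0mx.
rewrite Rem {Rem}.
have hS : forall j : 'I_r, (j.+1 < r)%N -> Sc j \in unitmx.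
  by move=> j jr; have [] := P1 j jr.
case: (eqVneq i k) => [<- | nik].
  rewrite /Wb eqxx Id'E mulmx1.
  have [c|c] := boolP ((0 < i)%N && (i.+1 < r)%N); rewrite ?c ?(negbTE c).
    rewrite (Hz i i); last by case => /= h _; move: c; lia.
    have -> : (i.+1 < r)%N = true by move: c; lia.
    have -> : ((j1:nat) == i) = false by move: c; lia.
    have -> : ((i:nat) == j1.+1) = true by move: c; lia.
    rewrite /=.
    rewrite (ScS i j1); [|lia|move: c; lia].
    rewrite mulmxKV ?hS //; last by move: c; lia.
    by rewrite mulmxA subrK add0r.
  rewrite addr0.
  case i0: ((i:nat) == 0%N).
    have -> : (i.+1 < r)%N = true by lia.
    by rewrite Sc0 //; apply/eqP.
  have -> : (i.+1 < r)%N = false by move: c; lia.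
  by rewrite Hz ?add0r //; case => /= h _; lia.
have nik' : (i:nat) != k by [].
rewrite (Hz i k) ?add0r; last by case=> /= a b; move: nik'; lia.
have -> : Wb i k = if ((k:nat) == i.+1) && (k.+1 < r)%N then invmx (Sc i) *m Sb i k else 0.
  by rewrite /Wb; have -> : ((i:nat) == k) = false by move: nik'; lia.
case ki: ((k:nat) == i.+1).
  have -> : (if (0 < i)%N && (i.+1 < r)%N then Sb i j1 *m invmx (Sc j1) *m Sc j1 *m Wb j1 k else 0) = 0.
    case: ifP => // c; rewrite /Wb.
    have -> : ((j1:nat) == k) = false by move: c; lia.
    have -> : ((k:nat) == j1.+1) = false by move: c; lia.
    by rewrite mulmx0.
  have -> : (i.+1 < r)%N = true by lia.
  case kr1: (k.+1 < r)%N.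
    by rewrite /= mulmxA mulmxV ?mul1mx ?addr0 // hS //; lia.
  by rewrite /= mulmx0 addr0; have [] := Slast i k ltac:(lia) ltac:(lia).
rewrite /= mulmx0 add0r.
have [c|c] := boolP ((0 < i)%N && (i.+1 < r)%N); rewrite ?c ?(negbTE c).
  case kj: ((k:nat) == j1).
    have ekj : k = j1 by apply: val_inj; apply/eqP.
    subst k.
    by rewrite /Wb eqxx Id'E mulmx1 mulmxKV // hS //; move: c; lia.
  rewrite /Wb.
  have -> : ((j1:nat) == k) = false by move: kj; lia.
  have -> : ((k:nat) == j1.+1) = false by move: c nik'; lia.
  rewrite !mulmx0; apply: Sz; move: c kj ki nik'; lia.
case kj: ((k.+1 : nat) == i).
  by have [] := Slast k i ltac:(move: c kj; lia) ltac:(lia).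
by apply: Sz; move: c kj ki nik'; lia.
Qed.
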